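(* There exists a constant $\delta_0>0$ such that the following holds. If $\|\mathcal T-\mathcal S\|_{\mathrm{op}}\le \delta_0$, then every local minimizer $x^+$ of $f$ corresponds to a vector of the form $x=x^\natural e^{i\theta}$ for some $\theta\in[0,2\pi)$ (and these points are global minimizers of $f$), and every saddle point of $f$ is strict, i.e. at every critical point of $f$ that is not a local minimizer the Hessian of $f$ has a strictly negative eigenvalue.
   Context: Let $n,m\ge 1$, $a_1,\dots,a_m\in\mathbb C^n$ and $x^\natural\in\mathbb C^n$. For $a,b\in\mathbb C^n$ write $\langle a,b\rangle=\sum_{j}a_j\overline{b_j}$ and let $\|\cdot\|$ be the Euclidean norm. Let $y_i=|\langle a_i,x^\natural\rangle|^2$. For $v\in\mathbb C^n$ put $v^+=(\mathrm{Re}\,v,\mathrm{Im}\,v)\in\mathbb R^{2n}$ and $v^-=Mv^+=(-\mathrm{Im}\,v,\mathrm{Re}\,v)$, where $M=\begin{bmatrix}0&-I_n\\ I_n&0\end{bmatrix}$. The map $x\mapsto x^+$ identifies $\mathbb C^n$ with $\mathbb R^{2n}$, and $x$ and $x^+$ always correspond to each other. Define $f:\mathbb R^{2n}\to\mathbb R$ by $f(x^+)=\sum_{i=1}^m\big(|\langle a_i,x\rangle|^2-y_i\big)^2=\sum_{i=1}^m\big(\langle A_ix^+,x^+\rangle-y_i\big)^2$ with $A_i=a_i^+(a_i^+)^{T}+a_i^-(a_i^-)^{T}$; gradients and Hessians are taken with respect to $x^+\in\mathbb R^{2n}$. Fix $\sigma>0$ (in the paper, $\sigma^2=\mathrm{Var}((a_i^+)_1)$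 for random measurement vectors) and set $c=m\sigma^4$. Define the order-4 tensors on $\mathbb R^{2n}$: $\mathcal T=\frac1c\sum_{i=1}^m(a_i^+)^{\otimes 4}$ and $\mathcal S_{i_1i_2i_3i_4}=\mathbf 1_{i_1=i_2,\,i_3=i_4}+\mathbf 1_{i_1=i_3,\,i_2=i_4}+\mathbf 1_{i_1=i_4,\,i_2=i_3}$ for $1\le i_1,i_2,i_3,i_4\le 2n$. The inner product of tensors is the sum of entrywise products, and $\|\mathcal R\|_{\mathrm{op}}=\sup\{\langle \mathcal R,u_1\otimes u_2\otimes u_3\otimes u_4\rangle:\ u_j\in\mathbb R^{2n},\ \|u_1\|\|u_2\|\|u_3\|\|u_4\|=1\}$. *)

(* Defs.v *)
From HB Require Import structures.
From mathcomp Require Import all_boot all_order all_algebra.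
From mathcomp Require Import all_classical all_reals all_analysis.
From mathcomp Require Import complex.
Set Implicit Arguments. Unset Strict Implicit. Unset Printing Implicit Defensive.
Import Order.TTheory GRing.Theory Num.Theory.
Import numFieldNormedType.Exports.
Local Open Scope classical_set_scope.
Local Open Scope ring_scope.

Section PhaseRetrieval.
Variable R : realType.

Definition vplus n (v : 'rV[R[i]]_n) : 'rV[R]_(n + n) :=
  row_mx (map_mx (@complex.Re R) v) (map_mx (@complex.Im R) v).

Definition vminus n (v : 'rV[R[i]]_n) : 'rV[R]_(n + n) :=
  row_mx (map_mx (fun z => - complex.Im z) v) (map_mx (@complex.Re R) v).

Definition cinner n (a b : 'rV[R[i]]_n) : R[i] :=
  \sum_(j < n) a 0 j * conjc (b 0 j).

Definition csqnorm (z : R[i]) : R := complex.Re z ^+ 2 + complex.Im z ^+ 2.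

(* A_i = a^+ (a^+)^T + a^- (a^-)^T  (row-vector convention) *)
Definition Amat n (a : 'rV[R[i]]_n) : 'M[R]_(n + n) :=
  (vplus a)^T *m vplus a + (vminus a)^T *m vminus a.

Definition qform N (A : 'M[R]_N) (u : 'rV[R]_N) : R := (u *m A *m u^T) 0 0.

Definition fobj n m (a : 'I_m -> 'rV[R[i]]_n) (xnat : 'rV[R[i]]_n)
  (u : 'rV[R]_(n + n)) : R :=
  \sum_(i < m) (qform (Amat (a i)) u - csqnorm (cinner (a i) xnat)) ^+ 2.

Definition tensor4 N := 'I_N -> 'I_N -> 'I_N -> 'I_N -> R.

Definition Ttensor n m (a : 'I_m -> 'rV[R[i]]_n) (sigma : R) : tensor4 (n + n) :=
  fun i1 i2 i3 i4 => (m%:R * sigma ^+ 4)^-1 *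
    \sum_(i < m) (vplus (a i) 0 i1 * vplus (a i) 0 i2 *
                  vplus (a i) 0 i3 * vplus (a i) 0 i4).

Definition Stensor N : tensor4 N :=
  fun i1 i2 i3 i4 => ((i1 == i2) && (i3 == i4))%:R
                   + ((i1 == i3) && (i2 == i4))%:R
                   + ((i1 == i4) && (i2 == i3))%:R.

Definition tsub N (T1 T2 : tensor4 N) : tensor4 N :=
  fun i1 i2 i3 i4 => T1 i1 i2 i3 i4 - T2 i1 i2 i3 i4.

Definition tinner N (T1 T2 : tensor4 N) : R :=
  \sum_(i1 < N) \sum_(i2 < N) \sum_(i3 < N) \sum_(i4 < N)
    T1 i1 i2 i3 i4 * T2 i1 i2 i3 i4.

Definition touter N (u1 u2 u3 u4 : 'rV[R]_N) : tensor4 N :=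
  fun i1 i2 i3 i4 => u1 0 i1 * u2 0 i2 * u3 0 i3 * u4 0 i4.

Definition enorm N (u : 'rV[R]_N) : R := Num.sqrt (\sum_(j < N) u 0 j ^+ 2).

Definition opnorm N (T : tensor4 N) : R :=
  sup [set t : R | exists u1 u2 u3 u4 : 'rV[R]_N,
         enorm u1 * enorm u2 * enorm u3 * enorm u4 = 1 /\
         t = tinner T (touter u1 u2 u3 u4)].

Definition local_minimizer N (f : 'rV[R]_N -> R) (u : 'rV[R]_N) : Prop :=
  \forall v \near u, f u <= f v.

Definition global_minimizer N (f : 'rV[R]_N -> R) (u : 'rV[R]_N) : Prop :=
  forall v, f u <= f v.

Definition evec N (j : 'I_N) : 'rV[R]_N := delta_mx 0 j.

Definition gradient N (f : 'rV[R]_N -> R) (u : 'rV[R]_N) : 'rV[R]_N :=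
  \row_(j < N) 'D_(evec j) f u.

Definition hessian N (f : 'rV[R]_N -> R) (u : 'rV[R]_N) : 'M[R]_N :=
  \matrix_(i < N, j < N) 'D_(evec j) (fun w => 'D_(evec i) f w) u.

Definition critical_point N (f : 'rV[R]_N -> R) (u : 'rV[R]_N) : Prop :=
  gradient f u = 0.

End PhaseRetrieval.

(* Main.v *)
Require Import Defs.
From HB Require Import structures.
From mathcomp Require Import all_boot all_order all_algebra.
From mathcomp Require Import all_classical all_reals all_analysis.
From mathcomp Require Import complex.
From mathcomp Require Import ring lra.
Import Order.TTheory GRing.Theory Num.Theory.
Import numFieldNormedType.Exports.
Local Open Scope ring_scope.
Set Implicit Arguments. Unset Strict Implicit. Unset Printing Implicit Defensive.

Section Lin.
Variable R : realType.

Definition dot k (x y : 'rV[R]_k) : R := \sum_(j < k) x 0 j * y 0 j.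

Lemma dotC k (x y : 'rV[R]_k) : dot x y = dot y x.
Proof. by apply: eq_bigr => j _; rewrite mulrC. Qed.

Lemma dotDl k (x y z : 'rV[R]_k) : dot (x + y) z = dot x z + dot y z.
Proof. by rewrite /dot -big_split; apply: eq_bigr => j _; rewrite mxE mulrDl. Qed.

Lemma dotZl k a (x z : 'rV[R]_k) : dot (a *: x) z = a * dot x z.
Proof. by rewrite /dot mulr_sumr; apply: eq_bigr => j _; rewrite mxE mulrA. Qed.

Lemma dotNl k (x z : 'rV[R]_k) : dot (- x) z = - dot x z.
Proof. by rewrite -scaleN1r dotZl mulN1r. Qed.

Lemma dotBl k (x y z : 'rV[R]_k) : dot (x - y) z = dot x z - dot y z.
Proof. by rewrite dotDl dotNl. Qed.

Lemma dotDr k (x y z : 'rV[R]_k) : dot z (x + y) = dot z x + dot z y.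
Proof. by rewrite dotC dotDl !(dotC z). Qed.

Lemma dotZr k a (x z : 'rV[R]_k) : dot z (a *: x) = a * dot z x.
Proof. by rewrite dotC dotZl dotC. Qed.

Lemma dotNr k (x z : 'rV[R]_k) : dot z (- x) = - dot z x.
Proof. by rewrite dotC dotNl dotC. Qed.

Lemma dotBr k (x y z : 'rV[R]_k) : dot z (x - y) = dot z x - dot z y.
Proof. by rewrite dotDr dotNr. Qed.

Lemma dot0l k (z : 'rV[R]_k) : dot 0 z = 0.
Proof. by rewrite /dot big1 // => j _; rewrite mxE mul0r. Qed.

Lemma dot0r k (z : 'rV[R]_k) : dot z 0 = 0.
Proof. by rewrite dotC dot0l. Qed.

Lemma dot_ge0 k (x : 'rV[R]_k) : 0 <= dot x x.
Proof. by apply: sumr_ge0 => j _; rewrite -expr2 sqr_ge0. Qed.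

Lemma dot_eq0 k (x : 'rV[R]_k) : dot x x = 0 -> x = 0.
Proof.
move=> /eqP; rewrite psumr_eq0; last by move=> j _; rewrite -expr2 sqr_ge0.
move=> /allP H; apply/rowP => j; rewrite mxE.
have := H j (mem_index_enum j); rewrite -expr2 sqrf_eq0 => /eqP ->//.
Qed.

Lemma dot_split k1 k2 (x y : 'rV[R]_(k1 + k2)) :
  dot x y = dot (lsubmx x) (lsubmx y) + dot (rsubmx x) (rsubmx y).
Proof. by rewrite /dot big_split_ord /=; congr (_ + _); apply: eq_bigr => j _; rewrite !mxE. Qed.

Variable n : nat.
Local Notation N := (n + n)%N.

Definition Mop (x : 'rV[R]_N) : 'rV[R]_N := row_mx (- rsubmx x) (lsubmx x).

Lemma lsub_Mop x : lsubmx (Mop x) = - rsubmx x. Proof. by rewrite row_mxKl. Qed.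
Lemma rsub_Mop x : rsubmx (Mop x) = lsubmx x. Proof. by rewrite row_mxKr. Qed.

Lemma MopD x y : Mop (x + y) = Mop x + Mop y.
Proof. by rewrite /Mop add_row_mx !linearD /= ?opprD. Qed.

Lemma MopZ a x : Mop (a *: x) = a *: Mop x.
Proof. by rewrite /Mop scale_row_mx !linearZ /= ?scalerN. Qed.

Lemma MopN x : Mop (- x) = - Mop x.
Proof. by rewrite -scaleN1r MopZ scaleN1r. Qed.

Lemma MopB x y : Mop (x - y) = Mop x - Mop y.
Proof. by rewrite MopD MopN. Qed.

Lemma MopK x : Mop (Mop x) = - x.
Proof. by rewrite /Mop lsub_Mop rsub_Mop -opp_row_mx hsubmxK. Qed.

Lemma dotMM x y : dot (Mop x) (Mop y) = dot x y.
Proof.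
by rewrite dot_split !lsub_Mop !rsub_Mop dotNl dotNr opprK addrC -dot_split.
Qed.

Lemma dotMl x y : dot (Mop x) y = - dot x (Mop y).
Proof.
rewrite (dot_split (Mop x)) (dot_split x) !lsub_Mop !rsub_Mop dotNl dotNr.
rewrite (dotC (rsubmx x)); ring.
Qed.

Lemma dotxMx x : dot x (Mop x) = 0.
Proof.
have := dotMl x x; rewrite dotC => /eqP; rewrite -subr_eq0 opprK -mulr2n.
by rewrite mulrn_eq0 /= => /eqP.
Qed.

Lemma dotMxx x : dot (Mop x) x = 0.
Proof. by rewrite dotC dotxMx. Qed.

End Lin.


Section C.
Variable R : realType.
Variable n : nat.
Lemma ReD (x y : R[i]) : complex.Re (x + y) = complex.Re x + complex.Re y.
Proof. by case: x => a b; case: y => c d. Qed.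
Lemma ImD (x y : R[i]) : complex.Im (x + y) = complex.Im x + complex.Im y.
Proof. by case: x => a b; case: y => c d. Qed.
Lemma Re_sum k (F : 'I_k -> R[i]) : complex.Re (\sum_(j < k) F j) = \sum_(j < k) complex.Re (F j).
Proof. by elim/big_rec2: _ => // j a b _ <-; rewrite ReD. Qed.
Lemma Im_sum k (F : 'I_k -> R[i]) : complex.Im (\sum_(j < k) F j) = \sum_(j < k) complex.Im (F j).
Proof. by elim/big_rec2: _ => // j a b _ <-; rewrite ImD. Qed.
Lemma ReMc (x y : R[i]) : complex.Re (x * conjc y) = complex.Re x * complex.Re y + complex.Im x * complex.Im y.
Proof. case: x => a b; case: y => c d /=. ring. Qed.
Lemma ImMc (x y : R[i]) : complex.Im (x * conjc y) = complex.Im x * complex.Re y - complex.Re x * complex.Im y.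
Proof. case: x => a b; case: y => c d /=. ring. Qed.
Lemma ReM (x y : R[i]) : complex.Re (x * y) = complex.Re x * complex.Re y - complex.Im x * complex.Im y.
Proof. case: x => a b; case: y => c d /=. ring. Qed.
Lemma ImM (x y : R[i]) : complex.Im (x * y) = complex.Re x * complex.Im y + complex.Im x * complex.Re y.
Proof. case: x => a b; case: y => c d /=. ring. Qed.

Lemma vminusE (a : 'rV[R[i]]_n) : vminus a = Mop (vplus a).
Proof.
rewrite /vminus /Mop /vplus row_mxKl row_mxKr; congr row_mx.
by apply/rowP => j; rewrite !mxE.
Qed.

Lemma mx11_dot k (u p : 'rV[R]_k) : (u *m p^T) 0 0 = dot u p.
Proof. by rewrite mxE; apply: eq_bigr => j _; rewrite mxE. Qed.

Lemma quad1 k (u p : 'rV[R]_k) : (u *m (p^T *m p) *m u^T) 0 0 = dot u p ^+ 2.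
Proof.
rewrite -!mulmxA !mulmxA -(mulmxA (u *m p^T)) mxE big_ord1 mx11_dot.
by rewrite mx11_dot (dotC p) expr2.
Qed.

Lemma qformE (a : 'rV[R[i]]_n) x :
  qform (Amat a) x = dot x (vplus a) ^+ 2 + dot x (vminus a) ^+ 2.
Proof.
by rewrite /qform /Amat mulmxDr mulmxDl mxE !quad1.
Qed.

Lemma csqE (a x : 'rV[R[i]]_n) :
  csqnorm (cinner a x) = dot (vplus a) (vplus x) ^+ 2 + dot (vplus a) (Mop (vplus x)) ^+ 2.
Proof.
rewrite /csqnorm /cinner Re_sum Im_sum; congr (_ ^+ 2 + _ ^+ 2).
  rewrite dot_split /vplus !row_mxKl !row_mxKr /dot -big_split /=.
  by apply: eq_bigr => j _; rewrite ReMc !mxE.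
rewrite dot_split lsub_Mop rsub_Mop /vplus !row_mxKl !row_mxKr /dot -big_split /=.
by apply: eq_bigr => j _; rewrite ImMc !mxE; ring.
Qed.

Lemma vplus_rot (c s : R) (x : 'rV[R[i]]_n) :
  vplus ((Complex c s) *: x) = c *: vplus x + s *: Mop (vplus x).
Proof.
rewrite /Mop /vplus row_mxKl row_mxKr !scale_row_mx add_row_mx; congr row_mx;
  apply/rowP => j; rewrite !mxE ?ReM ?ImM /=; ring.
Qed.
End C.


Local Open Scope classical_set_scope.
Section Eig.
Variable R : realType.
Variable k : nat.
Implicit Types (A : 'M[R]_k) (x y : 'rV[R]_k).

Lemma mx11_dot' k' (u p : 'rV[R]_k') : (u *m p^T) 0 0 = dot u p.
Proof. by rewrite mxE; apply: eq_bigr => j _; rewrite mxE. Qed.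

Definition bil A x y := (x *m A *m y^T) 0 0.

Lemma bilDl A x1 x2 y : bil A (x1 + x2) y = bil A x1 y + bil A x2 y.
Proof. by rewrite /bil !mulmxDl mxE. Qed.
Lemma bilZl A a x y : bil A (a *: x) y = a * bil A x y.
Proof. by rewrite /bil -!scalemxAl mxE. Qed.
Lemma bilC A x y : A^T = A -> bil A x y = bil A y x.
Proof.
move=> HA; rewrite /bil; transitivity ((x *m A *m y^T)^T 0 0); first by rewrite [RHS]mxE.
by rewrite !trmx_mul trmxK HA mulmxA.
Qed.
Lemma bilDr A x y1 y2 : A^T = A -> bil A x (y1 + y2) = bil A x y1 + bil A x y2.
Proof. by move=> HA; rewrite !(bilC x) // bilDl. Qed.
Lemma bilZr A a x y : A^T = A -> bil A x (a *: y) = a * bil A x y.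
Proof. by move=> HA; rewrite !(bilC x) // bilZl. Qed.
Lemma bilNl A x y : bil A (- x) y = - bil A x y.
Proof. by rewrite -scaleN1r bilZl mulN1r. Qed.
Lemma bilNr A x y : A^T = A -> bil A x (- y) = - bil A x y.
Proof. by move=> HA; rewrite !(bilC x) // bilNl. Qed.
Lemma bil0l A y : bil A 0 y = 0.
Proof. by rewrite -(scale0r 0) bilZl mul0r. Qed.

Lemma bil_sub A m : A^T = A -> forall x, bil (A - m%:M) x x = bil A x x - m * dot x x.
Proof.
move=> HA x; rewrite /bil mulmxBr mulmxBl mul_mx_scalar -scalemxAl.
rewrite [LHS]mxE; congr (_ + _); rewrite mxE; congr (- _).
by rewrite mxE mx11_dot'.
Qed.

Lemma bil_expand A x : bil A x x = \sum_(j < k) \sum_(i < k) x 0 i * A i j * x 0 j.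
Proof.
rewrite /bil mxE; apply: eq_bigr => j _; rewrite mxE mulr_suml; apply: eq_bigr => i _.
by rewrite mxE.
Qed.

Lemma entry_le_dot x i : `|x 0 i| ^+ 2 <= dot x x.
Proof.
rewrite /dot (bigD1 i) //= real_normK ?num_real // -expr2 lerDl.
by apply: sumr_ge0 => j _; rewrite -expr2 sqr_ge0.
Qed.

Lemma entry_le1 x i : dot x x = 1 -> `|x 0 i| <= 1.
Proof.
move=> H; have := entry_le_dot x i; rewrite H => h.
by rewrite -(expr_le1 (n:=2)) // normr_ge0.
Qed.

Definition absum A := \sum_(j < k) \sum_(i < k) `|A i j|.

Lemma bil_bound A x : dot x x = 1 -> `|bil A x x| <= absum A.
Proof.
move=> H; rewrite bil_expand /absum.
apply: (le_trans (ler_norm_sum _ _ _)); apply: ler_sum => j _.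
apply: (le_trans (ler_norm_sum _ _ _)); apply: ler_sum => i _.
rewrite !normrM.
have h1 := entry_le1 i H; have h2 := entry_le1 j H.
have h3 := normr_ge0 (A i j); have h4 := normr_ge0 (x 0 i); have h5 := normr_ge0 (x 0 j).
rewrite -[X in _ <= X]mulr1 -[X in _ <= X * 1]mul1r.
apply: ler_pM => //. all: try (apply: mulr_ge0 => //). all: try (apply: ler_wpM2r => //).
Qed.

Lemma absum_ge0 A : 0 <= absum A.
Proof. by apply: sumr_ge0 => i _; apply: sumr_ge0 => j _. Qed.

Lemma dot_gt0 x : x != 0 -> 0 < dot x x.
Proof.
move=> xn0; rewrite lt_def dot_ge0 andbT; apply/eqP => /dot_eq0 h.
by rewrite h eqxx in xn0.
Qed.

Lemma bilZZ A a x : bil A (a *: x) (a *: x) = a ^+ 2 * bil A x x.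
Proof.
rewrite bilZl /bil linearZ /= -scalemxAr mxE; ring.
Qed.

Lemma normalize x : x != 0 -> exists y, dot y y = 1 /\ forall A, bil A x x = dot x x * bil A y y.
Proof.
move=> xn0; have hp := dot_gt0 xn0.
have hs : 0 < Num.sqrt (dot x x) by rewrite sqrtr_gt0.
exists ((Num.sqrt (dot x x))^-1 *: x); split.
  rewrite dotZl dotZr mulrA -expr2 exprVn sqr_sqrtr ?mulVf //; [exact: lt0r_neq0 | exact: ltW].
move=> A; rewrite bilZZ exprVn sqr_sqrtr; last exact: ltW.
by rewrite mulrA mulfV ?mul1r // lt0r_neq0.
Qed.

Lemma neg_eig A : A^T = A -> (exists x, bil A x x < 0) -> exists l, l < 0 /\ eigenvalue A l.
Proof.
move=> HA [x0 Hx0].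
pose E := [set t : R | exists x, dot x x = 1 /\ t = bil A x x].
have x0n0 : x0 != 0.
  by apply/eqP => h; rewrite h bil0l ltxx in Hx0.
have [y0 [Hy0 Hy0']] := normalize x0n0.
have hp0 := dot_gt0 x0n0.
have Ey0 : E (bil A y0 y0) by exists y0.
have neg0 : bil A y0 y0 < 0.
  by rewrite Hy0' pmulr_rlt0 in Hx0.
have lbE : has_lbound E.
  exists (- absum A) => t [x [Hx ->]].
  by have := bil_bound A Hx; rewrite ler_norml => /andP[].
have nE : E !=set0 by exists (bil A y0 y0).
have hinf : has_inf E by split.
set mu := inf E.
have mule : forall x, dot x x = 1 -> mu <= bil A x x.
  by move=> x Hx; apply: ge_inf => //; exists x.
have mu_neg : mu < 0 by apply: le_lt_trans (mule _ Hy0) neg0.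
exists mu; split => //.
set A' := A - mu%:M.
have HA' : A'^T = A' by rewrite /A' linearB /= tr_scalar_mx HA.
have psd : forall x, 0 <= bil A' x x.
  move=> x; have [->|xn0] := eqVneq x 0; first by rewrite bil0l.
  have [y [Hy Hy']] := normalize xn0.
  rewrite bil_sub // Hy' -subr_ge0.
  have := mule _ Hy; have := dot_gt0 xn0; nra.
rewrite /eigenvalue /eigenspace -/A' kermx_eq0 row_free_unit.
apply/negP => uA.
set B := invmx A'.
have HB : B^T = B by rewrite /B trmx_inv HA'.
set K := absum B.
have K0 : 0 <= K := absum_ge0 B.
have key : forall x, dot x x = 1 -> (K + 2) / (K + 1) ^+ 2 <= bil A' x x.
  move=> x Hx.
  set y := x *m B.
  have bxy : bil A' x y = 1.
    rewrite /bil /y trmx_mul HB mulmxA -(mulmxA x) mulmxV // mulmx1.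
    by rewrite mx11_dot'.
  have byy : bil A' y y = bil B x x.
    rewrite /bil /y trmx_mul HB -!mulmxA (mulmxA B) mulVmx // mul1mx.
    by rewrite !mulmxA.
  have hK : bil B x x <= K.
    by have := bil_bound B Hx; rewrite ler_norml => /andP[].
  have := psd ((K + 1) *: x - y).
  rewrite bilDl !bilDr // !bilNl !(bilNr (A:=A')) // !bilZl !bilZr // [bil A' y x]bilC // bxy byy.
  move=> h.
  have hK1 : 0 < (K + 1) ^+ 2 by rewrite exprn_gt0 // ltr_wpDl.
  rewrite ler_pdivrMr //.
  nra.
have eps0 : 0 < (K + 2) / (K + 1) ^+ 2.
  by rewrite divr_gt0 // ?exprn_gt0 // ltr_wpDl.
have [e [z [Hz ->]] He] := inf_adherent eps0 hinf.
have := key z Hz; have := mule z Hz.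
rewrite bil_sub // Hz mulr1.
lra.
Qed.
End Eig.


Local Open Scope classical_set_scope.
Section Model.
Variable R : realType.
Variables n m : nat.
Local Notation N := (n + n)%N.
Variable p : 'I_m -> 'rV[R]_N.
Variable v : 'rV[R]_N.
Implicit Types (x y d e : 'rV[R]_N).

Definition P i x := dot (p i) x.
Definition gg i x := P i x ^+ 2 + P i (Mop x) ^+ 2.
Definition bet i x := gg i x - gg i v.
Definition gam i x d := 2 * (P i x * P i d + P i (Mop x) * P i (Mop d)).
Definition ff x := \sum_(i < m) bet i x ^+ 2.
Definition F1 x d := \sum_(i < m) 2 * bet i x * gam i x d.
Definition F2 x d := \sum_(i < m) (gam i x d ^+ 2 + 2 * bet i x * gg i d).
Definition F3 x d := \sum_(i < m) 2 * gam i x d * gg i d.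
Definition F4 x d := \sum_(i < m) gg i d ^+ 2.
Definition HH x e d := \sum_(i < m) 2 * (gam i x e * gam i x d + bet i x * gam i e d).
Definition K2 x e d := \sum_(i < m) 2 * (gg i e * gam i x d + gam i x e * gam i e d).
Definition K3 x e d := \sum_(i < m) 2 * (gg i e * gam i e d).

Lemma PD i x y : P i (x + y) = P i x + P i y. Proof. exact: dotDr. Qed.
Lemma PZ i a x : P i (a *: x) = a * P i x. Proof. exact: dotZr. Qed.
Lemma PN i x : P i (- x) = - P i x. Proof. exact: dotNr. Qed.
Lemma PB i x y : P i (x - y) = P i x - P i y. Proof. exact: dotBr. Qed.

Lemma gg_exp i h d x : gg i (h *: d + x) = gg i x + h * gam i x d + h ^+ 2 * gg i d.
Proof. by rewrite /gg /gam MopD MopZ !PD !PZ; ring. Qed.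

Lemma gam_exp i h e x d : gam i (h *: e + x) d = gam i x d + h * gam i e d.
Proof. by rewrite /gam MopD MopZ !PD !PZ; ring. Qed.

Lemma ff_exp h d x : ff (h *: d + x) =
  ff x + h * F1 x d + h ^+ 2 * F2 x d + h ^+ 3 * F3 x d + h ^+ 4 * F4 x d.
Proof.
rewrite /ff /F1 /F2 /F3 /F4 !mulr_sumr -!big_split /=; apply: eq_bigr => i _.
rewrite /bet gg_exp; ring.
Qed.

Lemma F1_exp h e x d : F1 (h *: e + x) d =
  F1 x d + h * HH x e d + h ^+ 2 * K2 x e d + h ^+ 3 * K3 x e d + h ^+ 4 * 0.
Proof.
rewrite mulr0 addr0 /F1 /HH /K2 /K3 !mulr_sumr -!big_split /=; apply: eq_bigr => i _.
rewrite /bet gg_exp gam_exp; ring.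
Qed.

Lemma gamC i x d : gam i x d = gam i d x.
Proof. by rewrite /gam; ring. Qed.
Lemma gamDr i x d1 d2 : gam i x (d1 + d2) = gam i x d1 + gam i x d2.
Proof. by rewrite /gam MopD !PD; ring. Qed.
Lemma gamZr i x a d : gam i x (a *: d) = a * gam i x d.
Proof. by rewrite /gam MopZ !PZ; ring. Qed.
Lemma gamDl i x1 x2 d : gam i (x1 + x2) d = gam i x1 d + gam i x2 d.
Proof. by rewrite gamC gamDr !(gamC i d). Qed.
Lemma gamZl i a x d : gam i (a *: x) d = a * gam i x d.
Proof. by rewrite gamC gamZr gamC. Qed.
Lemma gam_diag i d : gam i d d = 2 * gg i d.
Proof. by rewrite /gam /gg; ring. Qed.

Lemma F1Dr x d1 d2 : F1 x (d1 + d2) = F1 x d1 + F1 x d2.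
Proof. by rewrite /F1 -big_split /=; apply: eq_bigr => i _; rewrite gamDr; ring. Qed.
Lemma F1Zr x a d : F1 x (a *: d) = a * F1 x d.
Proof. by rewrite /F1 mulr_sumr; apply: eq_bigr => i _; rewrite gamZr; ring. Qed.
Lemma HHDl x e1 e2 d : HH x (e1 + e2) d = HH x e1 d + HH x e2 d.
Proof. by rewrite /HH -big_split /=; apply: eq_bigr => i _; rewrite gamDr gamDl; ring. Qed.
Lemma HHZl x a e d : HH x (a *: e) d = a * HH x e d.
Proof. by rewrite /HH mulr_sumr; apply: eq_bigr => i _; rewrite gamZr gamZl; ring. Qed.
Lemma HHDr x e d1 d2 : HH x e (d1 + d2) = HH x e d1 + HH x e d2.
Proof. by rewrite /HH -big_split /=; apply: eq_bigr => i _; rewrite !gamDr; ring. Qed.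
Lemma HHZr x a e d : HH x e (a *: d) = a * HH x e d.
Proof. by rewrite /HH mulr_sumr; apply: eq_bigr => i _; rewrite !gamZr; ring. Qed.
Lemma HHC x e d : HH x e d = HH x d e.
Proof. by apply: eq_bigr => i _; rewrite (gamC i e d); ring. Qed.
Lemma HH_diag x d : HH x d d = 2 * F2 x d.
Proof. by rewrite /HH /F2 mulr_sumr; apply: eq_bigr => i _; rewrite gam_diag; ring. Qed.

Lemma lin_sum (phi : 'rV[R]_N -> R) :
  (forall x y, phi (x + y) = phi x + phi y) -> (forall a x, phi (a *: x) = a * phi x) ->
  forall u, phi u = \sum_(j < N) u 0 j * phi (delta_mx 0 j).
Proof.
move=> HD HZ u; rewrite {1}(row_sum_delta u).
elim/big_rec2: _ => [|j a b _ <-]; last by rewrite HD HZ.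
by rewrite -(scale0r 0) HZ mul0r.
Qed.

End Model.


Lemma case1 (R : realType) (a b cc SE SB : R) :
  0 <= a -> 0 <= b -> 0 <= cc -> 0 < a + b - 2 * cc ->
  8 * (a + b - 2 * cc) <= 5 * (a + b + 2 * cc) ->
  SE <= 8 * (a + b - 2*cc)^+2 + 4 / 100 * (a + b - 2*cc)^+2 ->
  6 * (a - b)^+2 + 2 * ((a + b - 2 * cc) * (a + b + 2 * cc)) - 4 / 100 * ((a + b - 2 * cc) * (a + b + 2 * cc)) <= SB ->
  SE - 3 * SB < 0.
Proof.
move=> ha hb hc hX h85 hSE hSB.
have hY : 0 < a + b + 2 * cc by lra.
set X := a + b - 2 * cc in hX h85 hSE hSB *.
set Y := a + b + 2 * cc in hY h85 hSB *.
have hXY : 0 < X * Y by apply: mulr_gt0.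
have h1 : 8 * X^+2 <= 5 * (X * Y).
  have h0 : 0 <= 5 * Y - 8 * X by lra.
  have := mulr_ge0 (ltW hX) h0; rewrite expr2; lra.
have hZ : 0 <= (a - b)^+2 by apply: sqr_ge0.
lra.
Qed.
Lemma case2 (R : realType) (a b cc SG SB : R) :
  0 <= a -> 0 <= b -> 0 <= cc -> 0 < a + b ->
  5 * (a + b + 2 * cc) < 8 * (a + b - 2 * cc) ->
  SG <= 4 * (6 * cc^+2 + 2 * (a * b)) + 16 / 100 * (a * b) ->
  6 * (a - b)^+2 + 2 * ((a + b - 2 * cc) * (a + b + 2 * cc)) - 4 / 100 * ((a + b - 2 * cc) * (a + b + 2 * cc)) <= SB ->
  SG - 2 * SB < 0.
Proof.
move=> ha hb hc hab h85 hSG hSB.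
have h1 : 676 * cc^+2 < 9 * (a + b)^+2.
  have : 0 < 3 * (a + b) - 26 * cc by lra.
  have : 0 < 3 * (a + b) + 26 * cc by lra.
  move=> p1 p2; have := mulr_gt0 p1 p2; rewrite !expr2; lra.
have h2 : 0 <= (a - b)^+2 by apply: sqr_ge0.
have h3 : 0 < (a + b)^+2 by apply: exprn_gt0.
rewrite !expr2 in h1 h2 h3 hSG hSB *.
lra.
Qed.


Local Open Scope classical_set_scope.
Section Core.
Variable R : realType.
Variables n m : nat.
Local Notation N := (n + n)%N.
Variable p : 'I_m -> 'rV[R]_N.
Variable v : 'rV[R]_N.
Implicit Types (x y d e : 'rV[R]_N).
Local Notation P := (P p).
Local Notation gg := (gg p).
Local Notation bet := (bet p v).
Local Notation gam := (gam p).

Definition Gf x1 x2 x3 x4 := \sum_(i < m) P i x1 * P i x2 * P i x3 * P i x4.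
Definition Gs x1 x2 x3 x4 := dot x1 x2 * dot x3 x4 + dot x1 x3 * dot x2 x4 + dot x1 x4 * dot x2 x3.

Lemma enormE x : enorm x = Num.sqrt (dot x x).
Proof. by rewrite /enorm; congr Num.sqrt; apply: eq_bigr => j _; rewrite expr2. Qed.

Lemma enormM x : enorm (Mop x) = enorm x.
Proof. by rewrite !enormE dotMM. Qed.

Lemma sqrt4 (X Y : R) : 0 <= X -> 0 <= Y ->
  Num.sqrt X * Num.sqrt Y * Num.sqrt X * Num.sqrt Y = X * Y.
Proof.
move=> hX hY; transitivity ((Num.sqrt X ^+ 2) * (Num.sqrt Y ^+ 2)); first ring.
by rewrite !sqr_sqrtr.
Qed.

Variable c0 : R.
Hypothesis c0_gt0 : 0 < c0.
Hypothesis Htau : forall x1 x2 x3 x4,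
  `|c0^-1 * Gf x1 x2 x3 x4 - Gs x1 x2 x3 x4| <= 1/100 * (enorm x1 * enorm x2 * enorm x3 * enorm x4).

Lemma tau_le x y z t :
  c0^-1 * Gf x y z t <= Gs x y z t + 1/100 * (enorm x * enorm y * enorm z * enorm t).
Proof. have := Htau x y z t; rewrite ler_norml => /andP[_]; lra. Qed.
Lemma tau_ge x y z t :
  Gs x y z t - 1/100 * (enorm x * enorm y * enorm z * enorm t) <= c0^-1 * Gf x y z t.
Proof. have := Htau x y z t; rewrite ler_norml => /andP[h _]; lra. Qed.

Lemma core u w : (forall i, gg i w = gg i v) -> dot u (Mop w) = 0 -> 0 <= dot u w ->
  (forall d, F1 p v u d = 0) -> u != w -> F2 p v u (u - w) < 0 \/ F2 p v u w < 0.
Proof.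
move=> Hw Hal Hc HF1 uw.
set D := u - w; set s := u + w.
have Hbet : forall i, bet i u = P i D * P i s + P i (Mop D) * P i (Mop s).
  move=> i; rewrite /bet -Hw /gg /D /s MopB MopD !PB !PD; ring.
have HgamD : forall i, gam i u D = bet i u + gg i D.
  move=> i; rewrite /bet -Hw /gam /gg /D MopB !PB; ring.
set SB := \sum_(i < m) bet i u ^+ 2.
set SE := \sum_(i < m) gg i D ^+ 2.
set SG := \sum_(i < m) gam i u w ^+ 2.
have E1 : F2 p v u D + 3 * SB = 2 * F1 p v u D + SE.
  rewrite /F2 /F1 /SB /SE !mulr_sumr -!big_split /=; apply: eq_bigr => i _.
  rewrite HgamD; ring.
have E2 : 2 * F2 p v u w + 4 * SB = 2 * SG + F1 p v u u.
  rewrite /F2 /F1 /SB /SG !mulr_sumr -!big_split /=; apply: eq_bigr => i _.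
  rewrite gam_diag /bet -Hw; ring.
have ESB : SB = Gf D s D s + 2 * Gf D s (Mop D) (Mop s) + Gf (Mop D) (Mop s) (Mop D) (Mop s).
  rewrite /SB /Gf !mulr_sumr -!big_split /=; apply: eq_bigr => i _.
  rewrite Hbet; ring.
have ESE : SE = Gf D D D D + 2 * Gf D D (Mop D) (Mop D) + Gf (Mop D) (Mop D) (Mop D) (Mop D).
  rewrite /SE /Gf !mulr_sumr -!big_split /=; apply: eq_bigr => i _.
  rewrite /gg; ring.
have ESG : SG = 4 * (Gf u w u w + 2 * Gf u w (Mop u) (Mop w) + Gf (Mop u) (Mop w) (Mop u) (Mop w)).
  rewrite /SG /Gf !mulr_sumr -!big_split /= mulr_sumr; apply: eq_bigr => i _.
  rewrite /gam; ring.
have d2 : dot (Mop u) w = 0 by rewrite dotMl Hal oppr0.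
have d1 : dot w (Mop u) = 0 by rewrite dotC.
have d3 : dot (Mop w) u = 0 by rewrite dotC.
have hwu : dot w u = dot u w by rewrite dotC.
have ha := dot_ge0 u; have hb := dot_ge0 w.
set a := dot u u in ha *; set b := dot w w in hb *; set cc := dot u w in Hc hwu *.
have hX : 0 < dot D D.
  rewrite lt_def dot_ge0 andbT; apply/eqP => /dot_eq0 /eqP; rewrite subr_eq0.
  by apply/negP.
have eX : dot D D = a + b - 2 * cc.
  rewrite /D !dotBl !dotBr hwu /a /b /cc; ring.
have eY : dot s s = a + b + 2 * cc.
  rewrite /s !dotDl !dotDr hwu /a /b /cc; ring.
have eZ : dot D s = a - b.
  rewrite /D /s !dotBl !dotDr hwu /a /b /cc; ring.
have eZ' : dot s D = a - b by rewrite dotC.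
have eDM : dot D (Mop D) = 0 by rewrite dotxMx.
have eMDD : dot (Mop D) D = 0 by rewrite dotMxx.
have esM : dot s (Mop s) = 0 by rewrite dotxMx.
have eMss : dot (Mop s) s = 0 by rewrite dotMxx.
have eDMs : dot D (Mop s) = 0.
  rewrite /D /s MopD !dotBl !dotDr Hal d1 dotxMx dotxMx; ring.
have eMsD : dot (Mop s) D = 0 by rewrite dotC.
have esMD : dot s (Mop D) = 0 by rewrite dotC dotMl eDMs oppr0.
have eMDs : dot (Mop D) s = 0 by rewrite dotC.
have euMu : dot u (Mop u) = 0 by rewrite dotxMx.
have eMuu : dot (Mop u) u = 0 by rewrite dotMxx.
have ewMw : dot w (Mop w) = 0 by rewrite dotxMx.
have eMww : dot (Mop w) w = 0 by rewrite dotMxx.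
have eX0 : 0 <= dot D D by exact: dot_ge0.
have eY0 : 0 <= dot s s by exact: dot_ge0.
have LB : 6 * (a - b)^+2 + 2 * ((a + b - 2 * cc) * (a + b + 2 * cc)) -
          4 / 100 * ((a + b - 2 * cc) * (a + b + 2 * cc)) <= c0^-1 * SB.
  rewrite ESB !mulrDr.
  have t1 := tau_ge D s D s; have t2 := tau_ge D s (Mop D) (Mop s);
  have t3 := tau_ge (Mop D) (Mop s) (Mop D) (Mop s).
  rewrite /Gs !dotMM !enormM !enormE sqrt4 // in t1 t2 t3.
  rewrite eZ eZ' eDMs esMD ?eMDs eDM esM eX eY in t1 t2 t3.
  have -> : c0^-1 * (2 * Gf D s (Mop D) (Mop s)) = 2 * (c0^-1 * Gf D s (Mop D) (Mop s)) by ring.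
  lra.
have UE : c0^-1 * SE <= 8 * (a + b - 2*cc)^+2 + 4 / 100 * (a + b - 2*cc)^+2.
  rewrite ESE !mulrDr.
  have t1 := tau_le D D D D; have t2 := tau_le D D (Mop D) (Mop D);
  have t3 := tau_le (Mop D) (Mop D) (Mop D) (Mop D).
  rewrite /Gs !dotMM !enormM !enormE sqrt4 // in t1 t2 t3.
  rewrite eDM ?eMDD eX in t1 t2 t3.
  have -> : c0^-1 * (2 * Gf D D (Mop D) (Mop D)) = 2 * (c0^-1 * Gf D D (Mop D) (Mop D)) by ring.
  rewrite !expr2; lra.
have UG : c0^-1 * SG <= 4 * (6 * cc^+2 + 2 * (a * b)) + 16 / 100 * (a * b).
  rewrite ESG.
  have t1 := tau_le u w u w; have t2 := tau_le u w (Mop u) (Mop w);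
  have t3 := tau_le (Mop u) (Mop w) (Mop u) (Mop w).
  rewrite /Gs !dotMM !enormM !enormE sqrt4 // in t1 t2 t3.
  rewrite ?hwu ?Hal ?d1 ?d2 ?d3 ?euMu ?ewMw ?eMuu ?eMww in t1 t2 t3.
  have -> : c0^-1 * (4 * (Gf u w u w + 2 * Gf u w (Mop u) (Mop w) + Gf (Mop u) (Mop w) (Mop u) (Mop w)))
    = 4 * (c0^-1 * Gf u w u w) + 8 * (c0^-1 * Gf u w (Mop u) (Mop w)) + 4 * (c0^-1 * Gf (Mop u) (Mop w) (Mop u) (Mop w)) by ring.
  rewrite /a /b /cc in t1 t2 t3 *; rewrite !expr2; lra.
have ci : 0 < c0^-1 by rewrite invr_gt0.
have [h85|h85] := lerP (8 * (a + b - 2 * cc)) (5 * (a + b + 2 * cc)).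
  left.
  have hX' : 0 < a + b - 2 * cc by rewrite -eX.
  have := @case1 _ _ _ _ _ _ ha hb Hc hX' h85 UE LB.
  rewrite HF1 mulr0 add0r in E1.
  have -> : F2 p v u D = SE - 3 * SB by lra.
  move=> h; rewrite -(pmulr_rlt0 _ ci); rewrite mulrBr mulrCA; lra.
right.
have hab : 0 < a + b.
  rewrite eX in hX; lra.
have := @case2 _ _ _ _ _ _ ha hb Hc hab h85 UG LB.
rewrite HF1 addr0 in E2.
have -> : F2 p v u w = SG - 2 * SB by lra.
move=> h; rewrite -(pmulr_rlt0 _ ci); rewrite mulrBr mulrCA; lra.
Qed.
End Core.


Local Open Scope classical_set_scope.
Section Tensor.
Variable R : realType.
Variable n : nat.
Local Notation N := (n + n)%N.
Implicit Types (x y : 'rV[R]_N).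

Lemma prod4_sum (f1 f2 f3 f4 : 'I_N -> R) :
  (\sum_i f1 i) * (\sum_i f2 i) * (\sum_i f3 i) * (\sum_i f4 i) =
  \sum_i1 \sum_i2 \sum_i3 \sum_i4 (f1 i1 * f2 i2 * f3 i3 * f4 i4).
Proof.
symmetry.
under eq_bigr do under eq_bigr do under eq_bigr do rewrite -mulr_sumr.
under eq_bigr do under eq_bigr do rewrite -mulr_suml.
under eq_bigr do rewrite -mulr_suml.
rewrite -mulr_suml.
under eq_bigr do under eq_bigr do rewrite -mulr_sumr.
under eq_bigr do rewrite -mulr_suml.
rewrite -mulr_suml.
under eq_bigr do rewrite -mulr_sumr.
by rewrite -mulr_suml.
Qed.

Lemma exch4 m (F : 'I_m -> 'I_N -> 'I_N -> 'I_N -> 'I_N -> R) :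
  \sum_i1 \sum_i2 \sum_i3 \sum_i4 \sum_(i < m) F i i1 i2 i3 i4 =
  \sum_(i < m) \sum_i1 \sum_i2 \sum_i3 \sum_i4 F i i1 i2 i3 i4.
Proof.
transitivity (\sum_i1 \sum_i2 \sum_i3 \sum_(i < m) \sum_i4 F i i1 i2 i3 i4).
  apply: eq_bigr => i1 _; apply: eq_bigr => i2 _; apply: eq_bigr => i3 _.
  exact: exchange_big.
transitivity (\sum_i1 \sum_i2 \sum_(i < m) \sum_i3 \sum_i4 F i i1 i2 i3 i4).
  apply: eq_bigr => i1 _; apply: eq_bigr => i2 _; exact: exchange_big.
transitivity (\sum_i1 \sum_(i < m) \sum_i2 \sum_i3 \sum_i4 F i i1 i2 i3 i4).
  apply: eq_bigr => i1 _; exact: exchange_big.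
exact: exchange_big.
Qed.

Lemma kron (F : 'I_N -> 'I_N -> R) :
  \sum_i \sum_j ((i == j)%:R * F i j) = \sum_i F i i.
Proof.
apply: eq_bigr => i _; rewrite (bigD1 i) //= eqxx mul1r big1 ?addr0 //.
by move=> j /negbTE; rewrite eq_sym => ->; rewrite mul0r.
Qed.

Lemma natr_and (b1 b2 : bool) : (b1 && b2)%:R = b1%:R * b2%:R :> R.
Proof. by case: b1; case: b2; rewrite /= ?mul0r ?mul1r. Qed.

Lemma tinner_sub (A B : tensor4 R N) U : tinner (tsub A B) U = tinner A U - tinner B U.
Proof.
rewrite /tinner -sumrB; apply: eq_bigr => i1 _; rewrite -sumrB; apply: eq_bigr => i2 _.
rewrite -sumrB; apply: eq_bigr => i3 _; rewrite -sumrB; apply: eq_bigr => i4 _.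
by rewrite /tsub mulrBl.
Qed.

Section Terms.
Variable X : 'I_N -> 'I_N -> 'I_N -> 'I_N -> R.
Lemma pull2 (a b : R) (F : 'I_N -> R) : \sum_i (a * (b * F i)) = a * (b * \sum_i F i).
Proof. by rewrite -!mulr_sumr. Qed.

Lemma term1 : \sum_i1 \sum_i2 \sum_i3 \sum_i4 ((i1 == i2)%:R * ((i3 == i4)%:R * X i1 i2 i3 i4))
  = \sum_i1 \sum_i3 X i1 i1 i3 i3.
Proof.
under eq_bigr => i1 _ do under eq_bigr => i2 _ do under eq_bigr => i3 _ do rewrite -mulr_sumr.
under eq_bigr => i1 _ do under eq_bigr => i2 _ do rewrite -mulr_sumr.
rewrite kron; apply: eq_bigr => i1 _; exact: kron.
Qed.

Lemma term2 : \sum_i1 \sum_i2 \sum_i3 \sum_i4 ((i1 == i3)%:R * ((i2 == i4)%:R * X i1 i2 i3 i4))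
  = \sum_i1 \sum_i2 X i1 i2 i1 i2.
Proof.
under eq_bigr => i1 _ do rewrite exchange_big.
under eq_bigr => i1 _ do under eq_bigr => i3 _ do under eq_bigr => i2 _ do rewrite -mulr_sumr.
under eq_bigr => i1 _ do under eq_bigr => i3 _ do rewrite -mulr_sumr.
rewrite kron; apply: eq_bigr => i1 _; exact: kron.
Qed.

Lemma term3 : \sum_i1 \sum_i2 \sum_i3 \sum_i4 ((i2 == i3)%:R * ((i1 == i4)%:R * X i1 i2 i3 i4))
  = \sum_i1 \sum_i2 X i1 i2 i2 i1.
Proof.
under eq_bigr => i1 _ do under eq_bigr => i2 _ do under eq_bigr => i3 _ do rewrite -mulr_sumr.
under eq_bigr => i1 _ do rewrite kron.
under eq_bigr => i1 _ do rewrite exchange_big.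
under eq_bigr => i1 _ do under eq_bigr => i4 _ do rewrite -mulr_sumr.
by rewrite kron.
Qed.
End Terms.

Lemma tinner_S x1 x2 x3 x4 :
  tinner (@Stensor R N) (touter x1 x2 x3 x4) = Gs x1 x2 x3 x4.
Proof.
rewrite /tinner /Stensor /touter /Gs /dot.
have H : forall i1 i2 i3 i4 : 'I_N,
   (((i1 == i2) && (i3 == i4))%:R + ((i1 == i3) && (i2 == i4))%:R + ((i1 == i4) && (i2 == i3))%:R) *
   (x1 0 i1 * x2 0 i2 * x3 0 i3 * x4 0 i4) =
   (i1 == i2)%:R * ((i3 == i4)%:R * (x1 0 i1 * x2 0 i2 * x3 0 i3 * x4 0 i4)) +
   (i1 == i3)%:R * ((i2 == i4)%:R * (x1 0 i1 * x2 0 i2 * x3 0 i3 * x4 0 i4)) +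
   (i2 == i3)%:R * ((i1 == i4)%:R * (x1 0 i1 * x2 0 i2 * x3 0 i3 * x4 0 i4)) :> R.
  by move=> i1 i2 i3 i4; rewrite !natr_and; ring.
under eq_bigr => i1 _ do under eq_bigr => i2 _ do under eq_bigr => i3 _ do under eq_bigr => i4 _ do rewrite H.
under eq_bigr => i1 _ do under eq_bigr => i2 _ do under eq_bigr => i3 _ do rewrite !big_split /=.
under eq_bigr => i1 _ do under eq_bigr => i2 _ do rewrite !big_split /=.
under eq_bigr => i1 _ do rewrite !big_split /=.
rewrite !big_split /=.
rewrite (term1 (fun i1 i2 i3 i4 => x1 0 i1 * x2 0 i2 * x3 0 i3 * x4 0 i4)).
rewrite (term2 (fun i1 i2 i3 i4 => x1 0 i1 * x2 0 i2 * x3 0 i3 * x4 0 i4)).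
rewrite (term3 (fun i1 i2 i3 i4 => x1 0 i1 * x2 0 i2 * x3 0 i3 * x4 0 i4)).
rewrite !mulr_suml; congr (_ + _ + _); apply: eq_bigr => i _; rewrite mulr_sumr;
  apply: eq_bigr => j _; ring.
Qed.
Lemma tinner_T m (a : 'I_m -> 'rV[R[i]]_n) sigma x1 x2 x3 x4 :
  tinner (Ttensor a sigma) (touter x1 x2 x3 x4) =
  (m%:R * sigma ^+ 4)^-1 * Gf (fun i => vplus (a i)) x1 x2 x3 x4.
Proof.
rewrite /tinner /Ttensor /touter /Gf /P /dot.
under [X in _ = _ * X]eq_bigr => i _ do rewrite prod4_sum.
rewrite -exch4 !mulr_sumr; apply: eq_bigr => i1 _; rewrite mulr_sumr; apply: eq_bigr => i2 _.
rewrite mulr_sumr; apply: eq_bigr => i3 _; rewrite mulr_sumr; apply: eq_bigr => i4 _.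
rewrite !mulr_sumr mulr_suml; apply: eq_bigr => i _; ring.
Qed.
End Tensor.


Local Open Scope classical_set_scope.
Section Bound.
Variable R : realType.
Variable n : nat.
Local Notation N := (n + n)%N.
Implicit Types (x y : 'rV[R]_N).

Lemma entry_le_enorm x j : `|x 0 j| <= enorm x.
Proof.
rewrite enormE -(sqrtr_sqr (x 0 j)) -real_normK ?num_real //.
rewrite sqrtr_sqr normr_id.
rewrite -[X in X <= _]sqrtr_sqr ler_sqrt; last exact: dot_ge0.
by rewrite -real_normK ?num_real // entry_le_dot.
Qed.

Lemma enorm_ge0 x : 0 <= enorm x.
Proof. by rewrite enormE sqrtr_ge0. Qed.

Lemma enormZ a x : enorm (a *: x) = `|a| * enorm x.
Proof.
by rewrite !enormE dotZl dotZr mulrA -expr2 sqrtrM ?sqr_ge0 // sqrtr_sqr.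
Qed.

Lemma enorm_eq0 x : enorm x = 0 -> x = 0.
Proof.
rewrite enormE => /eqP; rewrite sqrtr_eq0 => h; apply: dot_eq0.
by apply/eqP; rewrite eq_le h dot_ge0.
Qed.

Definition tabs (W : tensor4 R N) := \sum_(i1 < N) \sum_(i2 < N) \sum_(i3 < N) \sum_(i4 < N) `|W i1 i2 i3 i4|.

Lemma tinner_bound W u1 u2 u3 u4 :
  `|tinner W (touter u1 u2 u3 u4)| <= tabs W * (enorm u1 * enorm u2 * enorm u3 * enorm u4).
Proof.
have -> : tabs W * (enorm u1 * enorm u2 * enorm u3 * enorm u4) =
  \sum_i1 \sum_i2 \sum_i3 \sum_i4 (`|W i1 i2 i3 i4| * (enorm u1 * enorm u2 * enorm u3 * enorm u4)).
  rewrite /tabs mulr_suml; apply: eq_bigr => i1 _; rewrite mulr_suml; apply: eq_bigr => i2 _.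
  rewrite mulr_suml; apply: eq_bigr => i3 _; rewrite mulr_suml; apply: eq_bigr => i4 _ //.
rewrite /tinner /touter.
apply: (le_trans (ler_norm_sum _ _ _)); apply: ler_sum => i1 _.
apply: (le_trans (ler_norm_sum _ _ _)); apply: ler_sum => i2 _.
apply: (le_trans (ler_norm_sum _ _ _)); apply: ler_sum => i3 _.
apply: (le_trans (ler_norm_sum _ _ _)); apply: ler_sum => i4 _.
rewrite !normrM.
have h1 := entry_le_enorm u1 i1; have h2 := entry_le_enorm u2 i2.
have h3 := entry_le_enorm u3 i3; have h4 := entry_le_enorm u4 i4.
have g := normr_ge0 (W i1 i2 i3 i4).
apply: ler_wpM2l => //.
apply: ler_pM; [| |apply: ler_pM; [| |apply: ler_pM|]|] => //;
  by rewrite ?mulr_ge0 ?normr_ge0.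
Qed.

Variable m : nat.
Variable a : 'I_m -> 'rV[R[i]]_n.
Variable sigma delta : R.
Local Notation W := (tsub (Ttensor a sigma) (@Stensor R N)).
Local Notation p := (fun i => vplus (a i)).
Local Notation c0 := (m%:R * sigma ^+ 4).

Lemma opnorm_ge u1 u2 u3 u4 : enorm u1 * enorm u2 * enorm u3 * enorm u4 = 1 ->
  tinner W (touter u1 u2 u3 u4) <= opnorm W.
Proof.
move=> H; apply: ub_le_sup; last by exists u1, u2, u3, u4.
exists (tabs W) => t [v1 [v2 [v3 [v4 [Hv ->]]]]].
have := tinner_bound W v1 v2 v3 v4; rewrite Hv mulr1.
by apply: le_trans; exact: ler_norm.
Qed.

Lemma GfZ a1 a2 a3 a4 x1 x2 x3 x4 :
  Gf p (a1 *: x1) (a2 *: x2) (a3 *: x3) (a4 *: x4) = a1 * a2 * a3 * a4 * Gf p x1 x2 x3 x4.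
Proof. by rewrite /Gf mulr_sumr; apply: eq_bigr => i _; rewrite !PZ; ring. Qed.

Lemma GsZ a1 a2 a3 a4 x1 x2 x3 x4 :
  Gs (a1 *: x1) (a2 *: x2) (a3 *: x3) (a4 *: x4) = a1 * a2 * a3 * a4 * Gs x1 x2 x3 x4.
Proof. by rewrite /Gs !dotZl !dotZr; ring. Qed.

Definition tau x1 x2 x3 x4 := c0^-1 * Gf p x1 x2 x3 x4 - Gs x1 x2 x3 x4.

Lemma tauZ a1 a2 a3 a4 x1 x2 x3 x4 :
  tau (a1 *: x1) (a2 *: x2) (a3 *: x3) (a4 *: x4) = a1 * a2 * a3 * a4 * tau x1 x2 x3 x4.
Proof. by rewrite /tau GfZ GsZ; ring. Qed.

Lemma tinner_tau x1 x2 x3 x4 : tinner W (touter x1 x2 x3 x4) = tau x1 x2 x3 x4.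
Proof. by rewrite tinner_sub tinner_T tinner_S. Qed.

Lemma Htau_from : opnorm W <= delta -> forall x1 x2 x3 x4,
  `|c0^-1 * Gf p x1 x2 x3 x4 - Gs x1 x2 x3 x4| <= delta * (enorm x1 * enorm x2 * enorm x3 * enorm x4).
Proof.
move=> Hop x1 x2 x3 x4; rewrite -/(tau x1 x2 x3 x4).
have zcase : forall k, (k = 0 -> tau x1 x2 x3 x4 = 0) -> enorm x1 * enorm x2 * enorm x3 * enorm x4 = 0 ->
   True by [].
have [e1|e1] := eqVneq (enorm x1) 0.
  rewrite e1 !mul0r mulr0 -(scale1r x2) -(scale1r x3) -(scale1r x4) (enorm_eq0 e1) -(scale0r 0).
  by rewrite tauZ !mul0r normr0.
have [e2|e2] := eqVneq (enorm x2) 0.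
  rewrite e2 mulr0 !mul0r mulr0 -(scale1r x1) -(scale1r x3) -(scale1r x4) (enorm_eq0 e2) -(scale0r 0).
  by rewrite tauZ mulr0 !mul0r normr0.
have [e3|e3] := eqVneq (enorm x3) 0.
  rewrite e3 mulr0 !mul0r mulr0 -(scale1r x1) -(scale1r x2) -(scale1r x4) (enorm_eq0 e3) -(scale0r 0).
  by rewrite tauZ mulr0 !mul0r normr0.
have [e4|e4] := eqVneq (enorm x4) 0.
  rewrite e4 !mulr0 -(scale1r x1) -(scale1r x2) -(scale1r x3) (enorm_eq0 e4) -(scale0r 0).
  by rewrite tauZ mulr0 !mul0r normr0.
have g1 : 0 < enorm x1 by rewrite lt_def e1 enorm_ge0.
have g2 : 0 < enorm x2 by rewrite lt_def e2 enorm_ge0.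
have g3 : 0 < enorm x3 by rewrite lt_def e3 enorm_ge0.
have g4 : 0 < enorm x4 by rewrite lt_def e4 enorm_ge0.
have nz : forall e : R, 0 < e -> enorm (e^-1 *: x1) = e^-1 * enorm x1 by
  move=> e he; rewrite enormZ gtr0_norm // invr_gt0.
set E := enorm x1 * enorm x2 * enorm x3 * enorm x4.
have gE : 0 < E by rewrite !mulr_gt0.
have one : forall (s : R) x (e : R), 0 < e -> enorm x = e -> enorm ((s * e^-1) *: x) = `|s| * 1.
  move=> s x e he hx; rewrite enormZ hx normrM (gtr0_norm (x := e^-1)) ?invr_gt0 // -mulrA mulVf ?gt_eqF //.
have key : forall s : R, `|s| = 1 ->
    s * ((enorm x1)^-1 * (enorm x2)^-1 * (enorm x3)^-1 * (enorm x4)^-1) * tau x1 x2 x3 x4 <= delta.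
  move=> s hs.
  have := opnorm_ge (u1 := (s * (enorm x1)^-1) *: x1) (u2 := (1 * (enorm x2)^-1) *: x2)
     (u3 := (1 * (enorm x3)^-1) *: x3) (u4 := (1 * (enorm x4)^-1) *: x4).
  rewrite !one // hs normr1 !mulr1 => /(_ erefl).
  rewrite tinner_tau tauZ => h; apply: le_trans Hop; apply: le_trans h; rewrite !mul1r !mulrA.
  by [].
have EE : (enorm x1)^-1 * (enorm x2)^-1 * (enorm x3)^-1 * (enorm x4)^-1 = E^-1.
  by rewrite /E !invfM.
rewrite EE in key.
have k1 := key 1 (normr1 _).
have k2 : -1 * E^-1 * tau x1 x2 x3 x4 <= delta by apply: key; rewrite normrN normr1.
rewrite mul1r in k1; rewrite mulN1r mulNr in k2.
have iE : 0 < E^-1 by rewrite invr_gt0.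
rewrite ler_norml; apply/andP; split.
  rewrite -(ler_pM2l iE).
  have -> : E^-1 * - (delta * E) = - delta by field; rewrite gt_eqF.
  lra.
rewrite -(ler_pM2l iE).
have -> : E^-1 * (delta * E) = delta by field; rewrite gt_eqF.
lra.
Qed.
End Bound.


Local Open Scope classical_set_scope.
Lemma locline (R : realType) k (f : 'rV[R]_k -> R) u d :
  local_minimizer f u -> exists2 e : R, 0 < e & forall h : R, `|h| < e -> f u <= f (h *: d + u).
Proof.
move=> H.
have cont : (fun h : R => h *: d + u) @ (0:R) --> u.
  have H0 := cvgD (cvgZ (@cvg_id _ (nbhs (0:R))) (cvg_cst d)) (cvg_cst u).
  rewrite scale0r add0r in H0. exact: H0.
have := cont _ H.
move=> /nbhs_ballP [e e0 He]; exists e => // h hh.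
apply: He; rewrite /ball /= sub0r normrN //.
Qed.

Lemma lim0 (R : realType) (c K eta : R) : 0 < eta -> 0 <= K ->
  (forall t, 0 < t -> t < eta -> 0 <= c + K * t) -> 0 <= c.
Proof.
move=> he hK H; rewrite leNgt; apply/negP => hc.
pose t := Num.min (eta / 2) (- c / (2 * K + 2)).
have h2K : 0 < 2 * K + 2 by lra.
have t1 : t <= eta / 2 by rewrite /t ge_min lexx.
have t2 : t <= - c / (2 * K + 2) by rewrite /t ge_min lexx orbT.
have t0 : 0 < t by rewrite /t lt_min; apply/andP; split; [lra| rewrite divr_gt0 //; lra].
have t3 : t < eta by lra.
have := H t t0 t3.
have : K * t <= K * (- c / (2 * K + 2)) by apply: ler_wpM2l.
have : K * (- c / (2 * K + 2)) < - c.
  rewrite mulrA ltr_pdivrMr //; nra.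
lra.
Qed.

Lemma poly_small (R : realType) (c1 c2 c3 c4 eta : R) : 0 < eta ->
  (forall h, `|h| < eta -> 0 <= h * c1 + h ^+ 2 * c2 + h ^+ 3 * c3 + h ^+ 4 * c4) ->
  c1 = 0 /\ 0 <= c2.
Proof.
move=> he H.
set K := `|c2| + `|c3| + `|c4|.
have hK : 0 <= K by rewrite /K !addr_ge0.
have eta' : 0 < Num.min eta 1 by rewrite lt_min he ltr01.
have bnd : forall t (a b c : R), 0 < t -> t < Num.min eta 1 ->
  a + t * b + t ^+ 2 * c <= `|a| + `|b| + `|c|.
  move=> t a b c t0; rewrite lt_min => /andP[_ t1].
  have hb : t * b <= t * `|b|.
    by apply: ler_wpM2l; [exact: ltW|exact: ler_norm].
  have hc : t ^+ 2 * c <= t ^+ 2 * `|c|.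
    by apply: ler_wpM2l; [rewrite exprn_ge0 // ltW|exact: ler_norm].
  have ha := ler_norm a.
  have tb : t * `|b| <= `|b| by rewrite ler_piMl // ltW.
  have tc : t ^+ 2 * `|c| <= `|c| by rewrite ler_piMl // expr_le1 // ltW.
  lra.
have small : forall t, 0 < t -> t < Num.min eta 1 -> `|t| < eta /\ `|- t| < eta.
  move=> t t0; rewrite lt_min => /andP[t1 _]; rewrite normrN gtr0_norm //.
have c1p : 0 <= c1.
  apply: (lim0 eta' hK) => t t0 t1.
  have [hs _] := small t t0 t1.
  have := H t hs.
  have -> : t * c1 + t ^+ 2 * c2 + t ^+ 3 * c3 + t ^+ 4 * c4 =
    t * (c1 + t * (c2 + t * c3 + t ^+ 2 * c4)) by ring.
  rewrite pmulr_rge0 // => h1.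
  have := bnd t c2 c3 c4 t0 t1; rewrite -/K => h2.
  have : t * (c2 + t * c3 + t ^+ 2 * c4) <= K * t.
    rewrite [K * t]mulrC; apply: ler_wpM2l; [exact: ltW | done].
  lra.
have c1n : 0 <= - c1.
  apply: (lim0 eta' hK) => t t0 t1.
  have [_ hs] := small t t0 t1.
  have := H (- t) hs.
  have -> : (- t) * c1 + (- t) ^+ 2 * c2 + (- t) ^+ 3 * c3 + (- t) ^+ 4 * c4 =
    t * (- c1 + t * (c2 + t * (- c3) + t ^+ 2 * c4)) by ring.
  rewrite pmulr_rge0 // => h1.
  have := bnd t c2 (- c3) c4 t0 t1; rewrite normrN -/K => h2.
  have : t * (c2 + t * (- c3) + t ^+ 2 * c4) <= K * t.
    rewrite [K * t]mulrC; apply: ler_wpM2l; [exact: ltW | done].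
  lra.
have c10 : c1 = 0 by lra.
split => //.
apply: (lim0 eta' hK) => t t0 t1.
have [hs _] := small t t0 t1.
have := H t hs.
have -> : t * c1 + t ^+ 2 * c2 + t ^+ 3 * c3 + t ^+ 4 * c4 =
  t ^+ 2 * (c2 + t * (c3 + t * c4)) by rewrite c10; ring.
rewrite pmulr_rge0 ?exprn_gt0 // => h1.
have := bnd t c3 c4 0 t0 t1; rewrite normr0 addr0 mulr0 addr0 => h2.
have : t * (c3 + t * c4) <= (`|c3| + `|c4|) * t.
  rewrite [_ * t]mulrC; apply: ler_wpM2l; [exact: ltW | done].
have : (`|c3| + `|c4|) * t <= K * t.
  apply: ler_wpM2r; [exact: ltW|]; rewrite /K -addrA lerDr normr_ge0 //.
lra.
Qed.


Local Open Scope classical_set_scope.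

Lemma derive_poly (R : realType) N (phi : 'rV[R]_N -> R) u E (c1 c2 c3 c4 : R) :
 (forall h : R, phi (h *: E + u) = phi u + h*c1 + h^+2*c2 + h^+3*c3 + h^+4*c4) ->
 'D_E phi u = c1.
Proof.
move=> H; rewrite /derive.
have Hc0 : (fun h : R => c1 + h*(c2 + h*(c3 + h*c4))) @ (0:R) --> c1.
  have L3 : (fun h : R => c3 + h*c4) @ (0:R) --> c3 + 0*c4.
    exact: cvgD (cvg_cst _) (cvgM cvg_id (cvg_cst _)).
  have L2 : (fun h : R => c2 + h*(c3 + h*c4)) @ (0:R) --> c2 + 0*(c3 + 0*c4).
    exact: cvgD (cvg_cst _) (cvgM cvg_id L3).
  have L1 := cvgD (cvg_cst c1) (cvgM cvg_id L2).
  rewrite mul0r addr0 in L1. exact: L1.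
have Hc : (fun h : R => c1 + h*(c2 + h*(c3 + h*c4))) @ (0:R)^' --> c1.
  exact: cvg_within_filter.
apply: cvg_lim; first exact: Rhausdorff.
idtac.
apply: cvg_trans Hc.
apply: near_eq_cvg; near=> h.
rewrite /= H.
have hn0 : h != 0 by near: h; exact: nbhs_dnbhs_neq.
rewrite -[h^-1 *: _]/(h^-1 * _).
field. exact: hn0.
Unshelve. all: by end_near.
Qed.


Local Close Scope classical_set_scope.

Section Angle.
Variable R : realType.

Lemma angle (c s : R) : c ^+ 2 + s ^+ 2 = 1 ->
  exists theta : R, 0 <= theta < 2 * pi /\ cos theta = c /\ sin theta = s.
Proof.
move=> H.
have hc : -1 <= c <= 1.
  have hc2 : c ^+ 2 <= 1 by rewrite -H lerDl sqr_ge0.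
  have hc1 : `|c| <= 1.
    by rewrite -(@expr_le1 _ 2) ?normr_ge0 // real_normK // num_real.
  by rewrite -ler_norml.
have hcin : c \in `[-1, 1] by rewrite in_itv /=.
have pi0 := pi_gt0 R.
have ss : Num.sqrt (1 - c ^+ 2) = `|s|.
  have -> : 1 - c ^+ 2 = s ^+ 2 by rewrite -H; ring.
  by rewrite sqrtr_sqr.
have [s0|s0] := leP 0 s.
  exists (acos c); split; last split.
  - apply/andP; split; first exact: acos_ge0.
    have := acos_lepi hc; lra.
  - exact: acosK.
  - by rewrite sin_acos // ss ger0_norm.
exists (2 * pi - acos c); split; last split.
- have a1 := acos_lepi hc.
  have a0 : 0 < acos c.
    apply: acos_gt0; apply/andP; split; first by case/andP: hc.
    rewrite lt_def; case/andP: hc => _ ->; rewrite andbT; apply/eqP => c1.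
    move: H; rewrite -c1 expr1n => H1.
    have : s ^+ 2 = 0 by lra.
    by move=> /eqP; rewrite sqrf_eq0 => /eqP s00; rewrite s00 ltxx in s0.
  apply/andP; split; lra.
- by rewrite cosB mulr_natl cos2pi sin2pi mul1r mul0r addr0 acosK.
- rewrite sinB mulr_natl cos2pi sin2pi mul1r mul0r sin_acos // ss ltr0_norm //.
  by rewrite sub0r opprK.
Qed.
End Angle.

Section Align.
Variable R : realType.
Variable n : nat.

Lemma dot_rot (u v : 'rV[R]_(n + n)) c s :
  dot u (c *: v + s *: Mop v) = c * dot u v + s * dot u (Mop v) /\
  dot u (Mop (c *: v + s *: Mop v)) = c * dot u (Mop v) - s * dot u v.
Proof.
split; first by rewrite dotDr !dotZr.
by rewrite MopD !MopZ MopK dotDr !dotZr dotNr; ring.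
Qed.

Lemma align (u v : 'rV[R]_(n + n)) : exists c s : R, c ^+ 2 + s ^+ 2 = 1 /\
  dot u (Mop (c *: v + s *: Mop v)) = 0 /\ 0 <= dot u (c *: v + s *: Mop v).
Proof.
set al := dot u v; set be := dot u (Mop v).
have [r0|rn0] := eqVneq (al ^+ 2 + be ^+ 2) 0.
  have ha : al ^+ 2 = 0.
    have := sqr_ge0 al; have := sqr_ge0 be; lra.
  have hb : be ^+ 2 = 0.
    have := sqr_ge0 al; have := sqr_ge0 be; lra.
  move: ha hb => /eqP; rewrite sqrf_eq0 => /eqP ha /eqP; rewrite sqrf_eq0 => /eqP hb.
  exists 1, 0; have [e1 e2] := dot_rot u v 1 0.
  rewrite e1 e2 -/al -/be ha hb; split; first by rewrite expr1n expr0n addr0.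
  by split; [ring | rewrite !mulr0 addr0].
have pos : 0 < al ^+ 2 + be ^+ 2.
  by rewrite lt_def rn0 addr_ge0 // sqr_ge0.
set r := Num.sqrt (al ^+ 2 + be ^+ 2).
have r0 : 0 < r by rewrite sqrtr_gt0.
have rr : r ^+ 2 = al ^+ 2 + be ^+ 2 by rewrite sqr_sqrtr // ltW.
exists (al / r), (be / r); have [e1 e2] := dot_rot u v (al / r) (be / r).
rewrite e1 e2 -/al -/be; split.
  rewrite !expr_div_n -mulrDl rr mulfV //; exact: lt0r_neq0.
split; first by field; exact: lt0r_neq0.
have -> : al / r * al + be / r * be = (al ^+ 2 + be ^+ 2) / r by field; exact: lt0r_neq0.
by rewrite divr_ge0 // ltW.
Qed.
End Align.

Theorem theorem1 (R : realType) :
  exists delta0 : R, 0 < delta0 /\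
  forall (n m : nat) (a : 'I_m -> 'rV[R[i]]_n) (xnat : 'rV[R[i]]_n) (sigma : R),
    (1 <= n)%N -> (1 <= m)%N -> 0 < sigma ->
    opnorm (tsub (Ttensor a sigma) (@Stensor R (n + n)%N)) <= delta0 ->
    (forall u : 'rV[R]_(n + n),
        local_minimizer (fobj a xnat) u ->
        (exists theta : R, 0 <= theta < 2 * pi /\
            u = vplus ((Complex (cos theta) (sin theta)) *: xnat))
        /\ global_minimizer (fobj a xnat) u)
    /\
    (forall u : 'rV[R]_(n + n),
        critical_point (fobj a xnat) u ->
        ~ local_minimizer (fobj a xnat) u ->
        exists lambda : R, lambda < 0 /\ eigenvalue (hessian (fobj a xnat) u) lambda).
Proof.
exists (1/100); split; first lra.
move=> n m a xnat sigma hn hm hs Hop.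
pose p := fun i => vplus (a i).
pose v := vplus xnat.
have Hf : fobj a xnat = ff p v.
  apply: funext => x; rewrite /fobj /ff; apply: eq_bigr => i _.
  rewrite qformE csqE vminusE /bet /gg /P /p /v; congr (_ ^+ 2).
  by rewrite (dotC x) (dotC x (Mop _)) dotMl sqrrN.
rewrite Hf.
have c0 : 0 < m%:R * sigma ^+ 4 by rewrite mulr_gt0 // ?ltr0n // exprn_gt0.
have Htau := Htau_from Hop.
have core' := core (v:=v) c0 Htau.
have grad : forall x d, 'D_d (ff p v) x = F1 p v x d.
  by move=> x d; apply: derive_poly => h; exact: ff_exp.
have hessE : forall x i j, hessian (ff p v) x i j = HH p v x (@evec R _ j) (@evec R _ i).
  move=> x i j; rewrite /hessian mxE.
  have -> : (fun w => 'D_(@evec R _ i) (ff p v) w) = (fun w => F1 p v w (@evec R _ i)).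
    by apply: funext => w; exact: grad.
  by apply: derive_poly => h; exact: F1_exp.
have ffge0 : forall x, 0 <= ff p v x.
  by move=> x; apply: sumr_ge0 => i _; exact: sqr_ge0.
have F1all : forall x, (forall j, F1 p v x (@evec R _ j) = 0) -> forall d, F1 p v x d = 0.
  move=> x H d; rewrite (@lin_sum _ _ (F1 p v x)); last exact: F1Zr; last exact: F1Dr.
  by apply: big1 => j _; rewrite -/(@evec R _ j) H mulr0.
have gw : forall c s : R, c ^+ 2 + s ^+ 2 = 1 -> forall i, gg p i (c *: v + s *: Mop v) = gg p i v.
  move=> c s cs i; rewrite /gg MopD !MopZ MopK !PD !PZ PN.
  transitivity ((c ^+ 2 + s ^+ 2) * (P p i v ^+ 2 + P p i (Mop v) ^+ 2)); first ring.
  by rewrite cs mul1r.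
have zero_at_w : forall c s : R, c ^+ 2 + s ^+ 2 = 1 -> ff p v (c *: v + s *: Mop v) = 0.
  move=> c s cs; apply: big1 => i _; rewrite /bet gw // subrr expr0n //.
split.
  move=> u Hloc.
  have HF : forall d, F1 p v u d = 0 /\ 0 <= F2 p v u d.
    move=> d; have [e e0 He] := locline d Hloc.
    apply: (poly_small (eta := e)) => // h hh; have := He h hh; rewrite ff_exp.
    move=> H0; rewrite -(lerD2l (ff p v u)) addr0 !addrA; exact: H0.
  have [c [s [cs [al ge]]]] := align u v.
  have [uw|uw] := eqVneq u (c *: v + s *: Mop v).
    split.
      have [th [thr [ct st]]] := angle cs.
      by exists th; split => //; rewrite vplus_rot ct st uw.
    by move=> y; rewrite uw zero_at_w //; exact: ffge0.
  exfalso.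
  have := core' u (c *: v + s *: Mop v) (gw c s cs) al ge (fun d => (HF d).1) uw.
  by case=> h; [have := (HF (u - (c *: v + s *: Mop v))).2 | have := (HF (c *: v + s *: Mop v)).2]; rewrite leNgt h.
move=> u Hcrit Hnot.
have HF1 : forall d, F1 p v u d = 0.
  apply: F1all => j; have := congr1 (fun M : 'rV[R]_(n + n) => M 0 j) Hcrit.
  by rewrite /gradient !mxE grad.
have [c [s [cs [al ge]]]] := align u v.
have [uw|uw] := eqVneq u (c *: v + s *: Mop v).
  exfalso; apply: Hnot; rewrite /local_minimizer.
  have H0 : forall y, ff p v u <= ff p v y by move=> y; rewrite uw zero_at_w //; exact: ffge0.
  near=> y; exact: H0.
  Unshelve. all: try by end_near.
have [d Hd] : exists d, F2 p v u d < 0.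
  by case: (core' u (c *: v + s *: Mop v) (gw c s cs) al ge HF1 uw) => h; [exists (u - (c *: v + s *: Mop v)) | exists (c *: v + s *: Mop v)].
have HmE : hessian (ff p v) u = \matrix_(i, j) HH p v u (@evec R _ j) (@evec R _ i).
  by apply/matrixP => i j; rewrite hessE mxE.
rewrite HmE.
apply: neg_eig.
  by apply/matrixP => i j; rewrite !mxE HHC.
exists d.
have -> : bil (\matrix_(i, j) HH p v u (@evec R _ j) (@evec R _ i)) d d =
  \sum_(j < n + n) d 0 j * HH p v u (@evec R _ j) d.
  rewrite bil_expand; apply: eq_bigr => j _.
  rewrite [in RHS](@lin_sum _ _ (HH p v u (@evec R _ j))); last (by move=> ? ?; rewrite HHZr); last (by move=> ? ?; rewrite HHDr).
  rewrite mulr_sumr; apply: eq_bigr => i _; rewrite mxE /evec; ring.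
rewrite -(@lin_sum _ _ (fun e => HH p v u e d)); last (by move=> ? ?; rewrite HHZl); last (by move=> ? ?; rewrite HHDl).
by rewrite HH_diag pmulr_rlt0.
Qed.
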